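(* Consider the CT–DT interconnected system of the context and let Assumptions (A1), (A2), (A3) hold with norms $\|\cdot\|_{\mathcal X}$, $\|\cdot\|_{\mathcal Z}$. Let $\xi\in\mathbb R$ with $\xi\ge\mathsf{osLip}_x(f)$ and let $\zeta>0$ be such that $\mathsf{osLip}\big(x\mapsto f(x,z^*(x))\big)\le-\zeta$, where $z^*(x)$ is the unique fixed point of $z\mapsto\mathsf G(x,z)$. Define $$C_1:=\frac{\mathsf{Lip}_z(f)\mathsf{Lip}_x(\mathsf G)}{1-\mathsf{Lip}_z(\mathsf G)}\Big(\mathsf{Lip}_x(f)+\frac{\mathsf{Lip}_z(f)\mathsf{Lip}_x(\mathsf G)}{1-\mathsf{Lip}_z(\mathsf G)}\Big),\qquad C_2(n):=[\mathsf{Lip}_z(\mathsf G)]^n\frac{\mathsf{Lip}_x(\mathsf G)\mathsf{Lip}_z(f)}{1-\mathsf{Lip}_z(\mathsf G)},$$ and $$T(n):=\begin{cases}\dfrac1\xi\log\Big(\dfrac{\xi(1-[\mathsf{Lip}_z(\mathsf G)]^n)}{C_2(n)+C_1/\zeta}+1\Big),&\xi\ne0,\\[2ex]\dfrac{1-[\mathsf{Lip}_z(\mathsf G)]^n}{C_2(n)+C_1/\zeta},&\xi=0,\end{cases}$$ (for $\xi<0$ such that the argument of the logarithm is $\le 0$, interpret $T(n)=+\infty$). Then for every $n\in\mathbb Z_{>0}$, $T(n)>0$, and for every $T$ with $0<T<T(n)$ the origin is globally exponentially stable for the interconnected system: there exist $\eta\in\mathbb R^2_{>0}$, $\varrho>0$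 and $\alpha>0$ such that every solution satisfies $$\big\|(\|x(t)\|_{\mathcal X},\|z(t)\|_{\mathcal Z})\big\|_{2,[\eta]}\le\varrho e^{-\alpha t}\big\|(\|x(0)\|_{\mathcal X},\|z(0)\|_{\mathcal Z})\big\|_{2,[\eta]}\quad\forall t\ge0,$$ where $\|(v_1,v_2)\|_{2,[\eta]}:=\sqrt{\eta_1v_1^2+\eta_2v_2^2}$.
   Context: Setup. Let $\|\cdot\|_{\mathcal X}$ be a norm on $\mathbb R^{n_x}$ and $\|\cdot\|_{\mathcal Z}$ a norm on $\mathbb R^{n_z}$; $\mathcal X\subseteq\mathbb R^{n_x}$, $\mathcal Z\subseteq\mathbb R^{n_z}$ convex. $f:\mathcal X\times\mathcal Z\to\mathbb R^{n_x}$ and $\mathsf G:\mathcal X\times\mathcal Z\to\mathcal Z$ continuous, $\mathsf G^1=\mathsf G$, $\mathsf G^{m+1}(x,z)=\mathsf G(x,\mathsf G^m(x,z))$. For $T>0$, $n\in\mathbb Z_{>0}$ the interconnected system is $\dot x(t)=f(x(t),z(t))$, $z_k=\mathsf G^n(x(kT),z_{k-1})$, $z(t)=z_k$ for $t\in[kT,(k+1)T)$, with $\mathcal X\times\mathcal Z$ forward invariant; $f(0,0)=0$, $\mathsf G(0,0)=0$ (so $z^*(0)=0$). Lipschitz notions: $\mathsf{Lip}_z(f):=\sup_x\sup_{z_1\ne z_2}\|f(x,z_1)-f(x,z_2)\|_{\mathcal X}/\|z_1-z_2\|_{\mathcal Z}$, and $\mathsf{Lip}_x(f),\mathsf{Lip}_x(\mathsf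 G),\mathsf{Lip}_z(\mathsf G)$ analogously. $\llbracket\cdot;\cdot\rrbracket$ is a weak pairing on $\mathbb R^{n_x}$ compatible with $\|\cdot\|_{\mathcal X}$; $\mathsf{osLip}_x(f):=\sup_z\sup_{x_1\ne x_2}\llbracket f(x_1,z)-f(x_2,z);x_1-x_2\rrbracket/\|x_1-x_2\|_{\mathcal X}^2$; for $F:\mathcal X\to\mathbb R^{n_x}$, $\mathsf{osLip}(F):=\sup_{x_1\ne x_2}\llbracket F(x_1)-F(x_2);x_1-x_2\rrbracket/\|x_1-x_2\|^2_{\mathcal X}$. Assumptions: (A1) $\mathsf{Lip}_x(f)<\infty$; (A2) $\mathsf{Lip}_z(f)\in(0,\infty)$ and $\mathsf{Lip}_x(\mathsf G)\in(0,\infty)$; (A3) $\mathsf{Lip}_z(\mathsf G)<1$. *)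

(* Defs.v *)
From HB Require Import structures.
From mathcomp Require Import all_boot all_order all_algebra.
From mathcomp Require Import all_classical all_reals all_analysis.
Set Implicit Arguments. Unset Strict Implicit. Unset Printing Implicit Defensive.
Import Order.TTheory GRing.Theory Num.Theory.
Import numFieldNormedType.Exports.
Local Open Scope classical_set_scope.
Local Open Scope ring_scope.

Section Defs.
Variable R : realType.

Definition is_norm (V : lmodType R) (N : V -> R) : Prop :=
  [/\ forall x, N x = 0 -> x = 0,
      forall (a : R) x, N (a *: x) = `|a| * N x &
      forall x y, N (x + y) <= N x + N y].

Definition is_weak_pairing (n : nat) (wp : 'rV[R]_n -> 'rV[R]_n -> R) : Prop :=
  [/\ forall x1 x2 y, wp (x1 + x2) y <= wp x1 y + wp x2 y,
      forall y, continuous (fun x => wp x y),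
      (forall (a : R) x y, 0 <= a -> wp (a *: x) y = a * wp x y /\ wp x (a *: y) = a * wp x y)
        /\ (forall x y, wp (- x) (- y) = wp x y),
      forall x, x != 0 -> 0 < wp x x &
      forall x y, `|wp x y| <= Num.sqrt (wp x x) * Num.sqrt (wp y y)].

Definition wp_compatible (n : nat) (wp : 'rV[R]_n -> 'rV[R]_n -> R) (N : 'rV[R]_n -> R) :=
  forall x, wp x x = N x ^+ 2.

Definition Lip_snd (A : Type) (B C : zmodType) (SA : set A) (SB : set B)
  (NB : B -> R) (NC : C -> R) (F : A -> B -> C) : \bar R :=
  ereal_sup [set r | exists a z1 z2, [/\ SA a, SB z1, SB z2, z1 != z2 &
      r = (NC (F a z1 - F a z2) / NB (z1 - z2))%:E]].

Definition Lip_fst (A : zmodType) (B : Type) (C : zmodType) (SA : set A) (SB : set B)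
  (NA : A -> R) (NC : C -> R) (F : A -> B -> C) : \bar R :=
  ereal_sup [set r | exists b x1 x2, [/\ SB b, SA x1, SA x2, x1 != x2 &
      r = (NC (F x1 b - F x2 b) / NA (x1 - x2))%:E]].

Definition osLip_fst (nx : nat) (B : Type) (SA : set 'rV[R]_nx) (SB : set B)
  (wp : 'rV[R]_nx -> 'rV[R]_nx -> R) (N : 'rV[R]_nx -> R)
  (F : 'rV[R]_nx -> B -> 'rV[R]_nx) : \bar R :=
  ereal_sup [set r | exists b x1 x2, [/\ SB b, SA x1, SA x2, x1 != x2 &
      r = (wp (F x1 b - F x2 b) (x1 - x2) / N (x1 - x2) ^+ 2)%:E]].

Definition osLip (nx : nat) (SA : set 'rV[R]_nx)
  (wp : 'rV[R]_nx -> 'rV[R]_nx -> R) (N : 'rV[R]_nx -> R)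
  (F : 'rV[R]_nx -> 'rV[R]_nx) : \bar R :=
  ereal_sup [set r | exists x1 x2, [/\ SA x1, SA x2, x1 != x2 &
      r = (wp (F x1 - F x2) (x1 - x2) / N (x1 - x2) ^+ 2)%:E]].

Definition Giter (A B : Type) (G : A -> B -> B) (n : nat) (x : A) (z : B) : B :=
  iter n (G x) z.

(* A solution of the CT-DT interconnection with sampling period T and n iterations:
   x : R -> R^nx (relevant on t >= 0); zs 0 = z_{-1} (initial DT state) and
   zs k.+1 = z_k, so that z(t) = zs k.+1 for t in [kT, (k+1)T). *)
Definition is_solution (nx nz : nat) (X : set 'rV[R]_nx) (Z : set 'rV[R]_nz)
  (f : 'rV[R]_nx -> 'rV[R]_nz -> 'rV[R]_nx) (G : 'rV[R]_nx -> 'rV[R]_nz -> 'rV[R]_nz)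
  (n : nat) (T : R) (x : R -> 'rV[R]_nx) (zs : nat -> 'rV[R]_nz) : Prop :=
  [/\ forall t, 0 <= t -> X (x t),
      forall k, Z (zs k),
      forall k : nat, zs k.+1 = Giter G n (x (k%:R * T)) (zs k),
      {within `[0, +oo[, continuous x} &
      forall (k : nat) (t : R), k%:R * T < t < k.+1%:R * T ->
        is_derive t 1 x (f (x t) (zs k.+1))].

Definition wnorm2 (eta1 eta2 v1 v2 : R) : R := Num.sqrt (eta1 * v1 ^+ 2 + eta2 * v2 ^+ 2).

Definition Tbound (LzG LxG Lzf Lxf xi zeta : R) (n : nat) : \bar R :=
  let K := Lzf * LxG / (1 - LzG) in
  let C1 := K * (Lxf + K) in
  let C2 := LzG ^+ n * (LxG * Lzf / (1 - LzG)) in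
  let D := C2 + C1 / zeta in
  if xi == 0 then ((1 - LzG ^+ n) / D)%:E
  else let arg := xi * (1 - LzG ^+ n) / D + 1 in
       if arg <= 0 then +oo%E else (ln arg / xi)%:E.

End Defs.

(* Main.v *)
Require Import Defs.
From HB Require Import structures.
From mathcomp Require Import all_boot all_order all_algebra.
From mathcomp Require Import all_classical all_reals all_analysis.
Import Order.TTheory GRing.Theory Num.Theory.
Import numFieldNormedType.Exports.
Local Open Scope classical_set_scope.
Local Open Scope ring_scope.

From mathcomp Require Import ring lra.
Set Implicit Arguments. Unset Strict Implicit.

Section S.
Variable R : realType.

Definition cont_on (D : R -> R) (t0 t1 : R) :=
  forall t, t0 <= t <= t1 -> forall e, 0 < e -> exists2 d, 0 < d &
    forall u, t0 <= u <= t1 -> `|u - t| < d -> `|D u - D t| < e.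

Lemma neg_stays (D : R -> R) (t0 t1 : R) :
  cont_on D t0 t1 -> D t0 < 0 ->
  (forall s, t0 < s < t1 -> D s = 0 -> exists2 d, 0 < d & forall h, 0 < h < d -> 0 < D (s - h)) ->
  forall t, t0 <= t <= t1 -> D t <= 0.
Proof.
move=> Dc Dt0 Dini t /andP[t0t tt1].
rewrite leNgt; apply/negP => Dt.
have t0lt : t0 < t.
  rewrite lt_neqAle t0t andbT; apply/negP => /eqP E; rewrite -E in Dt; lra.
pose S := [set u | t0 <= u <= t /\ forall v, t0 <= v <= u -> D v < 0].
have S0 : S t0.
  split; first by rewrite lexx t0t.
  by move=> v /andP[a b]; have -> : v = t0 by apply/eqP; rewrite eq_le a b.
have ubS : ubound S t by move=> u [/andP[_ ->]].
have hsS : has_sup S by split; [exists t0 | exists t].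
set s := sup S.
have t0s : t0 <= s by exact: sup_upper_bound.
have st : s <= t by apply: ge_sup => //; exists t0.
have A : forall v, t0 <= v < s -> D v < 0.
  move=> v /andP[t0v vs].
  have vs0 : 0 < s - v by lra.
  have [u [_ Hu] vu] := sup_adherent vs0 hsS.
  apply: Hu; rewrite t0v /=; move: vu; rewrite /s; lra.
have B : D s <= 0.
  have [E|t0s'] := eqVneq t0 s; first by rewrite -E ltW.
  have t0s2 : t0 < s by rewrite lt_neqAle t0s' t0s.
  rewrite leNgt; apply/negP => Ds.
  have [d d0 Hd] := Dc s (ltac:(rewrite t0s /=; lra)) (D s) Ds.
  pose v := Num.max t0 (s - d / 2).
  have v1 : t0 <= v by rewrite le_max lexx.
  have v2 : v < s by rewrite gt_max t0s2 /=; lra.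
  have := A v (ltac:(by rewrite v1 v2)).
  have := Hd v (ltac:(rewrite v1 /=; lra)).
  have : `|v - s| < d.
    rewrite ltr_norml; apply/andP; split; last by lra.
    have : s - d / 2 <= v by rewrite le_max lexx orbT.
    lra.
  move=> h1 h2; move: (h2 h1); rewrite ltr_norml; lra.
have C : D s = 0.
  apply/eqP; rewrite eq_le B /= leNgt; apply/negP => Ds.
  have [d d0 Hd] := Dc s (ltac:(rewrite t0s /=; lra)) (- D s) (ltac:(lra)).
  pose u := Num.min (s + d / 2) t.
  have u1 : u <= t by rewrite ge_min lexx orbT.
  have u2 : u <= s + d / 2 by rewrite ge_min lexx.
  have Su : S u.
    split; first by rewrite u1 andbT; rewrite le_min; apply/andP; split; lra.
    move=> v /andP[t0v vu].
    have [vs|sv] := ltP v s; first by apply: A; rewrite t0v vs.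
    have := Hd v (ltac:(rewrite t0v /=; lra)).
    have : `|v - s| < d by rewrite ltr_norml; apply/andP; split; lra.
    move=> h1 /(_ h1); rewrite ltr_norml; lra.
  have us : u <= s by apply: sup_upper_bound.
  have [ut|ut] := eqVneq u t.
    move: Su => [_ /(_ t)]; rewrite t0t ut lexx => /(_ isT); lra.
  have : u = s + d / 2.
    move: ut; rewrite /u /Num.min; case: ifP => //; move=> _ /eqP; done.
  lra.
have s0 : t0 < s.
  rewrite lt_neqAle t0s andbT; apply/negP => /eqP E; rewrite -E in C; lra.
have s1 : s < t1.
  have : s < t by rewrite lt_neqAle st andbT; apply/negP => /eqP E; rewrite E in C; lra.
  lra.
have [d d0 Hd] := Dini s (ltac:(rewrite s0 s1 //)) C.
pose h := Num.min d (s - t0) / 2.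
have hpos : 0 < Num.min d (s - t0) by rewrite lt_min d0 /=; lra.
have hd : Num.min d (s - t0) <= d by rewrite ge_min lexx.
have hs : Num.min d (s - t0) <= s - t0 by rewrite ge_min lexx orbT.
have := Hd h (ltac:(rewrite /h; apply/andP; split; lra)).
have := A (s - h) (ltac:(rewrite /h; apply/andP; split; lra)).
lra.
Qed.

Lemma deriv_expand (V : normedModType R) (f : R -> V) (s : R) (v : V) :
  is_derive s 1 f v -> forall e, 0 < e ->
  exists2 d, 0 < d & forall k, `|k| < d -> `|f (s + k) - f s - k *: v| <= e * `|k|.
Proof.
move=> [df dv] e e0.
have Hc : (fun h : R => h^-1 *: ((f \o shift s) (h *: 1) - f s)) @ 0^' --> v.
  by rewrite -dv; exact: df.
move/cvgrPdist_le : Hc => /(_ e e0).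
rewrite nearE /= /dnbhs /within /= => /nbhs_ballP [d /= d0 H].
exists d => // k kd.
have [->|k0] := eqVneq k 0.
  by rewrite addr0 subrr scale0r subr0 !normr0 mulr0.
have := H k; rewrite /ball /= sub0r normrN => /(_ kd k0).
rewrite /shift /= scaler1 [k + s]addrC => Hk.
have -> : f (s + k) - f s - k *: v = - (k *: (v - k^-1 *: (f (s + k) - f s))).
  by rewrite scalerBr scalerA mulfV // scale1r opprB.
rewrite normrN normrZ mulrC ler_wpM2r //.
Qed.

Lemma exp_expand (p : R) e : 0 < e -> exists2 d, 0 < d &
  forall k, `|k| < d -> `|expR (p + k) - expR p - k * expR p| <= e * `|k|.
Proof.
move=> e0; have [d d0 H] := deriv_expand (is_derive_expR p) e0.
by exists d => // k /H; rewrite /GRing.scale /=.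
Qed.

Definition psi (lam s : R) := if lam == 0 then s else (expR (lam * s) - 1) / lam.

Definition ysol (lam A B t0 u : R) :=
  if lam == 0 then A + B * (u - t0)
  else expR (lam * (u - t0)) * (A + B / lam) - B / lam.

Lemma ysolE lam A B t0 u :
  ysol lam A B t0 u = expR (lam * (u - t0)) * A + B * psi lam (u - t0).
Proof.
rewrite /ysol /psi; case: eqP => [->|l0]; first by rewrite mul0r expR0 mul1r.
by field; apply/eqP.
Qed.

Lemma ysol_t0 lam A B t0 : ysol lam A B t0 t0 = A.
Proof. by rewrite ysolE subrr mulr0 expR0 mul1r /psi; case: eqP; rewrite ?mulr0 ?expR0 ?subrr ?mul0r ?mulr0 addr0. Qed.

Lemma ysol_cont lam A B t0 s e : 0 < e ->
  exists2 d, 0 < d & forall u, `|u - s| < d -> `|ysol lam A B t0 u - ysol lam A B t0 s| < e.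
Proof.
move=> e0; rewrite /ysol; case: eqP => [l0|l0].
  exists (e / (`|B| + 1)); first by apply: divr_gt0 => //; lra.
  move=> u us.
  have -> : A + B * (u - t0) - (A + B * (s - t0)) = B * (u - s) by ring.
  rewrite normrM; have Bp : 0 <= `|B| by [].
  have := us; rewrite ltr_pdivlMr; last by lra.
  move=> H; nra.
set p := lam * (s - t0); set C := A + B / lam.
have [d d0 H] := exp_expand p ltr01.
have lp : 0 < `|lam| by rewrite normr_gt0; apply/eqP.
pose K := (`|C| * (expR p + 1) * `|lam| + 1).
have h1 : 0 <= expR p + 1 by have := expR_gt0 p; lra.
have Kp : 0 < K by rewrite /K; have := mulr_ge0 (mulr_ge0 (normr_ge0 C) h1) (normr_ge0 lam); lra.
exists (Num.min (d / `|lam|) (e / K)).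
  by rewrite lt_min; apply/andP; split; apply: divr_gt0.
move=> u us.
have us1 : `|u - s| < d / `|lam| by move: us; rewrite lt_min => /andP[].
have us2 : `|u - s| < e / K by move: us; rewrite lt_min => /andP[].
have k1 : `|lam * (u - s)| < d by rewrite normrM -ltr_pdivlMl // mulrC.
have := H _ k1.
have -> : lam * (u - t0) = p + lam * (u - s) by rewrite /p; ring.
set k := lam * (u - s) => Hk.
have -> : expR (p + k) * C - B / lam - (expR p * C - B / lam) =
    C * (expR (p + k) - expR p - k * expR p) + C * k * expR p by ring.
apply: (le_lt_trans (ler_normD _ _)).
rewrite !normrM (gtr0_norm (expR_gt0 p)).
have ke : `|u - s| * K < e by rewrite -ltr_pdivlMr.
have kk : `|k| <= `|lam| * `|u - s| by rewrite /k normrM.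
have Cp := normr_ge0 C. have kp := normr_ge0 k. have ep := expR_gt0 p.
have : `|C| * `|expR (p + k) - expR p - k * expR p| <= `|C| * `|k| by
  apply: ler_wpM2l => //; rewrite -[X in _ <= X]mul1r.
move: ke; rewrite /K => ke H2.
have lu := normr_ge0 (u - s).
have : `|C| * `|k| * (1 + expR p) <= `|C| * (`|lam| * `|u - s|) * (1 + expR p).
  by apply: ler_wpM2r; [lra | apply: ler_wpM2l].
nra.
Qed.

Lemma ysol_dini lam A B t0 s e : 0 < e ->
  exists2 d, 0 < d & forall h, 0 < h < d ->
    h * (lam * ysol lam A B t0 s + B) - e * h <= ysol lam A B t0 s - ysol lam A B t0 (s - h).
Proof.
move=> e0; rewrite /ysol; case: eqP => [l0|l0].
  exists 1 => // h /andP[h0 _]; rewrite l0 mul0r add0r.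
  have : 0 < e * h by apply: mulr_gt0.
  lra.
set p := lam * (s - t0); set C := A + B / lam.
have lp : 0 < `|lam| by rewrite normr_gt0; apply/eqP.
have Cp := normr_ge0 C.
have e'0 : 0 < e / (`|C| * `|lam| + 1) by apply: divr_gt0 => //; nra.
have [d d0 H] := exp_expand p e'0.
exists (d / `|lam|); first exact: divr_gt0.
move=> h /andP[h0 hd].
have k1 : `|- lam * h| < d by rewrite normrM normrN (gtr0_norm h0) -ltr_pdivlMl // mulrC.
have := H _ k1.
have -> : lam * (s - h - t0) = p + - lam * h by rewrite /p; ring.
set k := - lam * h.
set r := expR (p + k) - expR p - k * expR p => Hr.
have -> : expR p * C - B / lam - (expR (p + k) * C - B / lam) = h * (lam * (expR p * C - B / lam) + B) - C * r.
  rewrite /r /k /C; field; apply/eqP.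
  done.
have : `|C * r| <= e * h.
  rewrite normrM.
  have kk : `|k| = `|lam| * h by rewrite /k normrM normrN (gtr0_norm h0).
  rewrite kk in Hr.
  have : `|C| * `|r| <= `|C| * (e / (`|C| * `|lam| + 1) * (`|lam| * h)) by apply: ler_wpM2l.
  move=> H1; apply: (le_trans H1).
  set q := e / (`|C| * `|lam| + 1).
  have hq : q * (`|C| * `|lam| + 1) = e by rewrite /q divfK //; apply/lt0r_neq0; nra.
  have q0 : 0 < q by [].
  have : 0 <= q * h by apply: mulr_ge0; lra.
  nra.
rewrite ler_norml => /andP[? ?]; lra.
Qed.

Lemma le_eps (a b c : R) : (forall e, 0 < e -> a <= b + e * c) -> a <= b.
Proof.
move=> H; rewrite leNgt; apply/negP => ab.
have cp := normr_ge0 c.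
have e0 : 0 < (a - b) / (`|c| + 1) by apply: divr_gt0; lra.
have := H _ e0; set e := (a - b) / (`|c| + 1) => He.
have hq : e * (`|c| + 1) = a - b by rewrite /e divfK //; apply/lt0r_neq0; lra.
have : e * c <= e * `|c| by apply: ler_wpM2l; [exact: ltW e0 | exact: ler_norm].
rewrite mulrDr mulr1 in hq; move: e0; rewrite -/e; lra.
Qed.

Definition dini_le (g : R -> R) (t0 t1 lam mu : R) :=
  forall s, t0 < s < t1 -> forall e, 0 < e -> exists2 d, 0 < d &
    forall h, 0 < h < d -> g s - g (s - h) <= h * (lam * g s + mu + e).

Lemma comparison (g : R -> R) t0 t1 lam mu :
  cont_on g t0 t1 -> dini_le g t0 t1 lam mu ->
  forall t, t0 <= t <= t1 -> g t <= expR (lam * (t - t0)) * g t0 + mu * psi lam (t - t0).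
Proof.
move=> gc gd t tt.
apply: (@le_eps _ _ (expR (lam * (t - t0)) + psi lam (t - t0))) => eps eps0.
pose y := ysol lam (g t0 + eps) (mu + eps) t0.
have : g t - y t <= 0.
  apply: (neg_stays (D := fun u => g u - y u) (t0 := t0) (t1 := t1)) => //.
  - move=> u uu e e0.
    have e20 : 0 < e / 2 by lra.
    have [d1 d10 H1] := gc u uu _ e20.
    have [d2 d20 H2] := ysol_cont lam (g t0 + eps) (mu + eps) t0 u e20.
    exists (Num.min d1 d2); first by rewrite lt_min d10.
    move=> v vv; rewrite lt_min => /andP[v1 v2].
    have := H1 v vv v1; have := H2 v v2; rewrite /y.
    set a := g v - g u; set b := ysol _ _ _ _ v - ysol _ _ _ _ u.
    move=> hb ha.
    have -> : g v - ysol lam (g t0 + eps) (mu + eps) t0 v - (g u - ysol lam (g t0 + eps) (mu + eps) t0 u) = a - b by rewrite /a /b; ring.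
    apply: (le_lt_trans (ler_normB _ _)). lra.
  - by rewrite /y ysol_t0; lra.
  - move=> s ss Ds.
    have e40 : 0 < eps / 4 by lra.
    have [d1 d10 H1] := gd s ss _ e40.
    have [d2 d20 H2] := ysol_dini lam (g t0 + eps) (mu + eps) t0 s e40.
    exists (Num.min d1 d2); first by rewrite lt_min d10.
    move=> h /andP[h0]; rewrite lt_min => /andP[hd1 hd2].
    have := H1 h (ltac:(by rewrite h0)); have := H2 h (ltac:(by rewrite h0)).
    rewrite /y in Ds |- *.
    have gs : g s = ysol lam (g t0 + eps) (mu + eps) t0 s by lra.
    rewrite gs.
    move=> HA HB.
    have : 0 < eps * h by apply: mulr_gt0.
    rewrite !mulrDr in HA HB. lra.
rewrite /y ysolE. lra.
Qed.
End S.

Section S.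
Variable R : realType.
Section N.
Variable V : lmodType R.
Variable N : V -> R.
Hypothesis hN : is_norm N.
Lemma N0 : N 0 = 0.
Proof. case: hN => _ h _; by rewrite -(scale0r 0) h normr0 mul0r. Qed.
Lemma NN x : N (- x) = N x.
Proof. case: hN => _ h _; by rewrite -scaleN1r h normrN normr1 mul1r. Qed.
Lemma Nge0 x : 0 <= N x.
Proof.
case: hN => _ _ h; have := h x (- x); rewrite subrr N0 NN => H; lra.
Qed.
Lemma NB x y : N (x - y) = N (y - x).
Proof. by rewrite -NN opprB. Qed.
Lemma Ntri x y : N (x + y) <= N x + N y.
Proof. by case: hN. Qed.
Lemma NZ a x : N (a *: x) = `|a| * N x.
Proof. by case: hN. Qed.
Lemma Nrev x y : N x - N y <= N (x - y).
Proof. by rewrite lerBlDr; apply: le_trans (Ntri _ _); rewrite subrK. Qed.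
Lemma Ntri3 x y z : N (x - z) <= N (x - y) + N (y - z).
Proof. by apply: le_trans (Ntri _ _); rewrite addrA subrK. Qed.
End N.

Lemma mx_entry_le n (v : 'rV[R]_n) i : `|v 0 i| <= `|v|.
Proof.
rewrite [X in _ <= X]mx_normrE.
exact: (le_bigmax 0 (fun ij : 'I_1 * 'I_n => `|v ij.1 ij.2|) (0, i)).
Qed.

Lemma Nbound n (N : 'rV[R]_n -> R) : is_norm N ->
  exists2 C, 0 <= C & forall v, N v <= C * `|v|.
Proof.
move=> hN; exists (\sum_(j < n) N (delta_mx 0 j)).
  by apply: sumr_ge0 => j _; exact: Nge0.
move=> v; rewrite {1}(row_sum_delta v) mulr_suml.
elim/big_ind2: _ => //.
- by rewrite N0.
- move=> a b c d H1 H2; have := Ntri hN b d; have := lerD H1 H2; lra.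
- move=> j _; rewrite (NZ hN) mulrC; apply: ler_wpM2l; first exact: (Nge0 hN).
  exact: mx_entry_le.
Qed.

Section WP.
Variable n : nat.
Variable N : 'rV[R]_n -> R.
Variable wp : 'rV[R]_n -> 'rV[R]_n -> R.
Hypothesis hN : is_norm N.
Hypothesis hwp : is_weak_pairing wp.
Hypothesis hc : wp_compatible wp N.

Lemma wp_add x1 x2 y : wp (x1 + x2) y <= wp x1 y + wp x2 y.
Proof. by case: hwp. Qed.
Lemma wp_scale a x y : 0 <= a -> wp (a *: x) y = a * wp x y.
Proof. by case: hwp => _ _ [H _] _ _ ha; case: (H a x y ha). Qed.
Lemma wp_CS x y : wp x y <= N x * N y.
Proof.
case: hwp => _ _ _ _ H; apply: le_trans (ler_norm _) _.
apply: (le_trans (H x y)); rewrite !hc !sqrtr_sqr !ger0_norm //; exact: Nge0.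
Qed.
Lemma wp0 y : wp 0 y = 0.
Proof. by rewrite -(scale0r 0) wp_scale // mul0r. Qed.

Lemma norm_dini (x : R -> 'rV[R]_n) (c : 'rV[R]_n) (s : R) (v : 'rV[R]_n) lam mu :
  is_derive s 1 x v -> 0 <= mu ->
  wp v (x s - c) <= (lam * N (x s - c) + mu) * N (x s - c) ->
  forall e, 0 < e -> exists2 d, 0 < d & forall h, 0 < h < d ->
    N (x s - c) - N (x (s - h) - c) <= h * (lam * N (x s - c) + mu + e).
Proof.
move=> dx mu0 Hv e e0.
have [C C0 HC] := Nbound hN.
have e'0 : 0 < e / (C + 1) by apply: divr_gt0 => //; lra.
have [d d0 Hd] := deriv_expand dx e'0.
exists d => // h /andP[h0 hd].
have hk : `|- h| < d by rewrite normrN gtr0_norm.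
have := Hd _ hk; rewrite normrN (gtr0_norm h0) scaleNr opprK.
set r := x (s + - h) - x s + h *: v => Hr.
have Nr : N r <= e * h.
  apply: (le_trans (HC r)).
  have : C * `|r| <= C * (e / (C + 1) * h) by apply: ler_wpM2l.
  move=> H1; apply: (le_trans H1).
  have hq : e / (C + 1) * (C + 1) = e by rewrite divfK //; apply/lt0r_neq0; lra.
  have : 0 <= e / (C + 1) * h by apply: mulr_ge0; lra.
  nra.
set y := x s - c; set w := x (s - h) - c.
have yw : y = w + (h *: v - r) by rewrite /y /w /r; rewrite -[s - h]/(s + - h); apply/rowP => i; rewrite !mxE; ring.
have H1 : N y ^+ 2 <= N w * N y + (h * wp v y + N r * N y).
  rewrite -hc {1}yw; apply: (le_trans (wp_add _ _ _)).
  apply: lerD; first exact: wp_CS.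
  apply: (le_trans (wp_add _ _ _)); rewrite wp_scale; last lra.
  apply: lerD => //; apply: (le_trans (wp_CS _ _)); rewrite (NN hN) //.
have Ny0 := Nge0 hN y; have Nw0 := Nge0 hN w.
have [Ny|Ny] := eqVneq (N y) 0.
  rewrite Ny mulr0 add0r.
  have : 0 <= h * (mu + e) by apply: mulr_ge0; lra.
  lra.
have Nyp : 0 < N y by rewrite lt_neqAle eq_sym Ny.
have H2 : h * wp v y <= h * ((lam * N y + mu) * N y) by apply: ler_wpM2l; lra.
have : N y * N y <= N y * (N w + h * (lam * N y + mu) + N r).
  rewrite expr2 in H1; nra.
rewrite ler_pM2l // => H3.
have : h * e >= N r by lra.
nra.
Qed.
End WP.
End S.

Section S.
Variable R : realType.
Local Open Scope ereal_scope.
Lemma sup_fine_ub (S : set (\bar R)) (r : R) : S r%:E -> ereal_sup S < +oo ->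
  (r <= fine (ereal_sup S))%R.
Proof.
move=> Sr; have := ereal_sup_ubound Sr.
by case: (ereal_sup S) => [s| |] //=; rewrite lee_fin.
Qed.

Lemma sup_fine_ge0 (S : set (\bar R)) : (forall e, S e -> 0 <= e) ->
  ereal_sup S < +oo -> (0 <= fine (ereal_sup S))%R.
Proof.
move=> H hs.
have [[e Se]|S0] := pselect (exists e, S e).
  have h1 := ereal_sup_ubound Se; have h2 := H e Se.
  have h3 : 0 <= ereal_sup S by apply: le_trans h2 h1.
  move: hs h3; case: (ereal_sup S) => [s| |] //= _; by rewrite lee_fin.
have -> : S = set0 by apply/seteqP; split => x Sx //; exfalso; apply: S0; exists x.
by rewrite ereal_sup0.
Qed.

Lemma fine_lt1 (S : set (\bar R)) : ereal_sup S < 1%:E -> (fine (ereal_sup S) < 1)%R.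
Proof. case: (ereal_sup S) => [s| |] //=; rewrite ?lte_fin //; move=> _; exact: ltr01. Qed.

Lemma fine_gt0 (S : set (\bar R)) : 0 < ereal_sup S < +oo -> (0 < fine (ereal_sup S))%R.
Proof. move=> /andP[h1 h2]; move: h1 h2; case: (ereal_sup S) => [s| |] //= h1 _; move: h1; rewrite lte_fin //. Qed.
Local Close Scope ereal_scope.

Lemma Npos (V : lmodType R) (N : V -> R) : is_norm N -> forall z, z != 0 -> 0 < N z.
Proof.
move=> hN z z0; rewrite lt_neqAle (Nge0 hN) andbT; apply/negP => /eqP H.
by case: hN => h _ _; move/eqP: z0; apply; apply: h.
Qed.

Lemma Lip_snd_le (A : Type) (B C : lmodType R) (SA : set A) (SB : set B) NB NC
  (F : A -> B -> C) a z1 z2 :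
  is_norm NB -> is_norm NC -> (Lip_snd SA SB NB NC F < +oo)%E -> SA a -> SB z1 -> SB z2 ->
  NC (F a z1 - F a z2) <= fine (Lip_snd SA SB NB NC F) * NB (z1 - z2).
Proof.
move=> hB hC hs Sa S1 S2.
have [->|z12] := eqVneq z1 z2; first by rewrite !subrr (N0 hB) (N0 hC) mulr0.
have Bp : 0 < NB (z1 - z2) by apply: (Npos hB); rewrite subr_eq0.
have := @sup_fine_ub _ (NC (F a z1 - F a z2) / NB (z1 - z2)) _ hs.
rewrite ler_pdivrMr // => -> //.
by exists a, z1, z2; split.
Qed.

Lemma Lip_fst_le (A : lmodType R) (B : Type) (C : lmodType R) (SA : set A) (SB : set B) NA NC
  (F : A -> B -> C) b x1 x2 :
  is_norm NA -> is_norm NC -> (Lip_fst SA SB NA NC F < +oo)%E -> SB b -> SA x1 -> SA x2 ->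
  NC (F x1 b - F x2 b) <= fine (Lip_fst SA SB NA NC F) * NA (x1 - x2).
Proof.
move=> hA hC hs Sb S1 S2.
have [->|x12] := eqVneq x1 x2; first by rewrite !subrr (N0 hA) (N0 hC) mulr0.
have Ap : 0 < NA (x1 - x2) by apply: (Npos hA); rewrite subr_eq0.
have := @sup_fine_ub _ (NC (F x1 b - F x2 b) / NA (x1 - x2)) _ hs.
rewrite ler_pdivrMr // => -> //.
by exists b, x1, x2; split.
Qed.

Lemma Lip_snd_ge0 (A : Type) (B C : lmodType R) (SA : set A) (SB : set B) NB NC
  (F : A -> B -> C) : is_norm NB -> is_norm NC -> (Lip_snd SA SB NB NC F < +oo)%E ->
  0 <= fine (Lip_snd SA SB NB NC F).
Proof.
move=> hB hC hs; apply: sup_fine_ge0 hs => e [a [z1 [z2 [_ _ _ _ ->]]]].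
by rewrite lee_fin; apply: divr_ge0; apply: Nge0.
Qed.

Lemma Lip_fst_ge0 (A : lmodType R) (B : Type) (C : lmodType R) (SA : set A) (SB : set B) NA NC
  (F : A -> B -> C) : is_norm NA -> is_norm NC -> (Lip_fst SA SB NA NC F < +oo)%E ->
  0 <= fine (Lip_fst SA SB NA NC F).
Proof.
move=> hA hC hs; apply: sup_fine_ge0 hs => e [a [z1 [z2 [_ _ _ _ ->]]]].
by rewrite lee_fin; apply: divr_ge0; apply: Nge0.
Qed.

Lemma osLip_fst_le nx (B : Type) (SA : set 'rV[R]_nx) (SB : set B) wp N
  (F : 'rV[R]_nx -> B -> 'rV[R]_nx) (xi : R) b x1 x2 :
  is_norm N -> is_weak_pairing wp -> (osLip_fst SA SB wp N F <= xi%:E)%E -> SB b -> SA x1 -> SA x2 ->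
  wp (F x1 b - F x2 b) (x1 - x2) <= xi * N (x1 - x2) ^+ 2.
Proof.
move=> hN hwp hs Sb S1 S2.
have [->|x12] := eqVneq x1 x2.
  by rewrite !subrr (N0 hN) expr0n /= mulr0 (wp0 hwp).
have Ap : 0 < N (x1 - x2) ^+ 2 by apply: exprn_gt0; apply: (Npos hN); rewrite subr_eq0.
rewrite -ler_pdivrMr //; rewrite -lee_fin; apply: le_trans hs.
by apply: ereal_sup_ubound; exists b, x1, x2; split.
Qed.

Lemma osLip_le nx (SA : set 'rV[R]_nx) wp N (F : 'rV[R]_nx -> 'rV[R]_nx) (xi : R) x1 x2 :
  is_norm N -> is_weak_pairing wp -> (osLip SA wp N F <= xi%:E)%E -> SA x1 -> SA x2 ->
  wp (F x1 - F x2) (x1 - x2) <= xi * N (x1 - x2) ^+ 2.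
Proof.
move=> hN hwp hs S1 S2.
have [->|x12] := eqVneq x1 x2.
  by rewrite !subrr (N0 hN) expr0n /= mulr0 (wp0 hwp).
have Ap : 0 < N (x1 - x2) ^+ 2 by apply: exprn_gt0; apply: (Npos hN); rewrite subr_eq0.
rewrite -ler_pdivrMr //; rewrite -lee_fin; apply: le_trans hs.
by apply: ereal_sup_ubound; exists x1, x2; split.
Qed.
End S.

Section D.
Variable R : realType.
Definition qd (m11 m12 m21 m22 : R) :=
  (m12 + ((1 - m11) * (1 - m22) - m12 * m21) / (2 * (m21 + 1))) / (1 - m22).
Definition thd (m11 m12 m21 m22 : R) :=
  Num.max (Num.max (m11 + qd m11 m12 m21 m22 * m21)
    ((m12 + qd m11 m12 m21 m22 * m22) / qd m11 m12 m21 m22)) (1/2).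
Lemma decay (Xs Es : nat -> R) (m11 m12 m21 m22 : R) :
  0 <= m11 -> 0 <= m12 -> 0 <= m21 -> 0 <= m22 -> m11 < 1 -> m22 < 1 ->
  m12 * m21 < (1 - m11) * (1 - m22) ->
  (forall k, 0 <= Xs k) -> (forall k, 0 <= Es k) ->
  (forall k, Xs k.+1 <= m11 * Xs k + m12 * Es k) ->
  (forall k, Es k.+1 <= m21 * Xs k + m22 * Es k) ->
  let q := qd m11 m12 m21 m22 in let th := thd m11 m12 m21 m22 in
  [/\ 0 < q, 0 < th, th < 1 &
    forall k, Xs k + q * Es k <= th ^+ k * (Xs 0%N + q * Es 0%N)].
Proof.
move=> h11 h12 h21 h22 l11 l22 hD X0 E0 HX HE q th.
set D := (1 - m11) * (1 - m22) - m12 * m21.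
have D0 : 0 < D by rewrite /D; lra.
set dl := D / (2 * (m21 + 1)).
have dl0 : 0 < dl by rewrite /dl; apply: divr_gt0 => //; lra.
have hdl : dl * (2 * (m21 + 1)) = D by rewrite /dl divfK //; apply/lt0r_neq0; lra.
have qE : q = (m12 + dl) / (1 - m22) by [].
have hq : q * (1 - m22) = m12 + dl by rewrite qE divfK //; apply/lt0r_neq0; lra.
have q0 : 0 < q by rewrite qE; apply: divr_gt0; lra.
set th1 := m11 + q * m21.
set th2 := (m12 + q * m22) / q.
have hth2 : th2 * q = m12 + q * m22 by rewrite /th2 divfK //; apply/lt0r_neq0.
have t1 : th1 < 1.
  rewrite /th1.
  have : q * m21 * (1 - m22) = (m12 + dl) * m21 by rewrite -hq; ring.
  have : dl * m21 < D by nra.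
  move=> H1 H2.
  have : (q * m21) * (1 - m22) < (1 - m11) * (1 - m22) by rewrite H2; rewrite /D in H1; nra.
  move=> H3; have : q * m21 < 1 - m11.
    by rewrite -(ltr_pM2r (x := 1 - m22)) //; lra.
  lra.
have t2 : th2 < 1.
  have : th2 * q < q by rewrite hth2; nra.
  move=> H; rewrite -(ltr_pM2r q0) mul1r; exact: H.
have thE : th = Num.max (Num.max th1 th2) (1/2) by [].
have th0 : 0 < th by rewrite thE lt_max; apply/orP; right; lra.
have th1' : th < 1 by rewrite thE !gt_max t1 t2 /=; lra.
split => //.
have step : forall k, Xs k.+1 + q * Es k.+1 <= th * (Xs k + q * Es k).
  move=> k.
  have a1 : th1 <= th by rewrite thE !le_max lexx.
  have a2 : th2 <= th by rewrite thE !le_max lexx orbT.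
  have := HX k; have := HE k; have := X0 k; have := E0 k.
  move=> x0 e0 he hx.
  have : Xs k.+1 + q * Es k.+1 <= th1 * Xs k + th2 * q * Es k.
    rewrite hth2 /th1; nra.
  move=> H; apply: le_trans H _.
  have : th1 * Xs k <= th * Xs k by apply: ler_wpM2r.
  have : th2 * q * Es k <= th * q * Es k.
    by apply: ler_wpM2r => //; apply: ler_wpM2r => //; exact: ltW.
  lra.
elim => [|k IH]; first by rewrite expr0 mul1r.
apply: le_trans (step k) _.
rewrite exprS -mulrA; apply: ler_wpM2l => //; exact: ltW.
Qed.

Lemma sqrt_le_sum (A B : R) : 0 <= A -> 0 <= B -> Num.sqrt (1 * A ^+ 2 + 1 * B ^+ 2) <= A + B.
Proof.
move=> A0 B0; rewrite !mul1r.
have -> : A + B = Num.sqrt ((A + B) ^+ 2) by rewrite sqrtr_sqr ger0_norm //; lra.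
apply: ler_wsqrtr; rewrite sqrrD; have := mulr_ge0 A0 B0; lra.
Qed.
Lemma sum_le_sqrt (A B : R) : 0 <= A -> 0 <= B -> A + B <= 2 * Num.sqrt (1 * A ^+ 2 + 1 * B ^+ 2).
Proof.
move=> A0 B0; rewrite !mul1r.
have hA : A <= Num.sqrt (A ^+ 2 + B ^+ 2).
  rewrite -{1}(ger0_norm A0) -sqrtr_sqr; apply: ler_wsqrtr; have := sqr_ge0 B; lra.
have hB : B <= Num.sqrt (A ^+ 2 + B ^+ 2).
  rewrite -{1}(ger0_norm B0) -sqrtr_sqr; apply: ler_wsqrtr; have := sqr_ge0 A; lra.
lra.
Qed.
End D.

Section Psi.
Variable R : realType.
Lemma within_cont_ed (V : normedModType R) (A : set R) (f : R -> V) x :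
  {within A, continuous f} -> A x -> forall e, 0 < e ->
  exists2 d, 0 < d & forall y, A y -> `|y - x| < d -> `|f y - f x| < e.
Proof.
move=> /subspace_continuousP /(_ x) h Ax e e0.
have := h Ax; move/cvgrPdist_lt => /(_ e e0).
rewrite /within nearE /= => /nbhs_ballP [d /= d0 H].
exists d => // y Ay yx; rewrite distrC; apply: H => //.
by rewrite /ball /= distrC.
Qed.

Lemma psi0 (lam : R) : psi lam 0 = 0.
Proof. by rewrite /psi; case: eqP; rewrite ?mulr0 ?expR0 ?subrr ?mul0r. Qed.
Lemma psi_mono (lam s s' : R) : s <= s' -> psi lam s <= psi lam s'.
Proof.
move=> ss; rewrite /psi; case: eqP => // /eqP l0.
rewrite -subr_ge0 -mulrBl.
have E : (expR (lam * s') - 1 - (expR (lam * s) - 1)) = expR (lam * s') - expR (lam * s) by ring.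
rewrite E.
have [lp|ln] := ltP 0 lam.
  apply: divr_ge0; last exact: ltW.
  rewrite subr_ge0 ler_expR; apply: ler_wpM2l => //; exact: ltW.
have ln' : lam < 0 by rewrite lt_neqAle l0.
rewrite -mulrNN -invrN; apply: mulr_ge0; last by rewrite invr_ge0 oppr_ge0.
rewrite oppr_ge0 subr_le0 ler_expR; apply: ler_wnM2l => //; exact: ltW.
Qed.
Lemma psi_ge0 (lam s : R) : 0 <= s -> 0 <= psi lam s.
Proof. by move=> s0; rewrite -(psi0 lam); apply: psi_mono. Qed.
Lemma psiN_le (zeta s : R) : 0 < zeta -> psi (- zeta) s <= zeta^-1.
Proof.
move=> z0; rewrite /psi; case: eqP => [/eqP|_]; first by rewrite oppr_eq0 gt_eqF.
rewrite invrN mulrN -mulNr opprB.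
have := expR_gt0 (- zeta * s); rewrite ler_pdivrMr // mulVf ?gt_eqF //; lra.
Qed.
Lemma psiN_E (zeta s : R) : 0 < zeta -> psi (- zeta) s = (1 - expR (- zeta * s)) / zeta.
Proof.
move=> z0; rewrite /psi; case: eqP => [/eqP|_]; first by rewrite oppr_eq0 gt_eqF.
by rewrite invrN mulrN -mulNr opprB.
Qed.
End Psi.

Section Main.
Variables (R : realType) (nx nz : nat) (Nx : 'rV[R]_nx -> R) (Nz : 'rV[R]_nz -> R).
Variables (X : set 'rV[R]_nx) (Z : set 'rV[R]_nz).
Variables (f : 'rV[R]_nx -> 'rV[R]_nz -> 'rV[R]_nx) (G : 'rV[R]_nx -> 'rV[R]_nz -> 'rV[R]_nz).
Variables (wp : 'rV[R]_nx -> 'rV[R]_nx -> R) (zstar : 'rV[R]_nx -> 'rV[R]_nz).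
Variables (xi zeta L a b c : R).
Hypotheses (hNx : is_norm Nx) (hNz : is_norm Nz) (hwp : is_weak_pairing wp) (hc : wp_compatible wp Nx).
Hypotheses (X0 : X 0) (Z0 : Z 0) (f00 : f 0 0 = 0) (G00 : G 0 0 = 0).
Hypothesis GZ : forall x z, X x -> Z z -> Z (G x z).
Hypothesis hz : forall x, X x -> Z (zstar x) /\ G x (zstar x) = zstar x.
Hypotheses (hL0 : 0 <= L) (hL1 : L < 1) (a0 : 0 <= a) (b0 : 0 <= b) (c0 : 0 <= c) (zeta0 : 0 < zeta).
Hypothesis HG1 : forall x z1 z2, X x -> Z z1 -> Z z2 -> Nz (G x z1 - G x z2) <= L * Nz (z1 - z2).
Hypothesis HG2 : forall z x1 x2, Z z -> X x1 -> X x2 -> Nz (G x1 z - G x2 z) <= a * Nx (x1 - x2).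
Hypothesis Hf1 : forall x z1 z2, X x -> Z z1 -> Z z2 -> Nx (f x z1 - f x z2) <= b * Nz (z1 - z2).
Hypothesis Hf2 : forall z x1 x2, Z z -> X x1 -> X x2 -> Nx (f x1 z - f x2 z) <= c * Nx (x1 - x2).
Hypothesis Hxi : forall z x1 x2, Z z -> X x1 -> X x2 ->
  wp (f x1 z - f x2 z) (x1 - x2) <= xi * Nx (x1 - x2) ^+ 2.
Hypothesis Hzeta : forall x1 x2, X x1 -> X x2 ->
  wp (f x1 (zstar x1) - f x2 (zstar x2)) (x1 - x2) <= - zeta * Nx (x1 - x2) ^+ 2.

Definition Ka := a / (1 - L).
Definition Kc := b * a / (1 - L).

Lemma L1' : 0 < 1 - L. Proof. by rewrite subr_gt0. Qed.
Lemma Ka_ge0 : 0 <= Ka. Proof. by rewrite /Ka divr_ge0 // ltW // L1'. Qed.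
Lemma KcE : Kc = b * Ka. Proof. by rewrite /Kc /Ka mulrA. Qed.
Lemma Kc_ge0 : 0 <= Kc. Proof. by rewrite KcE mulr_ge0 // Ka_ge0. Qed.

Lemma zstar0 : zstar 0 = 0.
Proof.
have [Zs Gs] := hz X0.
have H := HG1 X0 Zs Z0; rewrite Gs G00 in H.
have Np := Nge0 hNz (zstar 0 - 0).
have : Nz (zstar 0 - 0) = 0.
  apply/eqP; rewrite eq_le Np andbT.
  have : (1 - L) * Nz (zstar 0 - 0) <= 0 by lra.
  rewrite pmulr_rle0 //; last by have := hL1; lra.
by case: hNz => h _ _ /h; rewrite subr0.
Qed.

Lemma zstar_lip x x' : X x -> X x' -> Nz (zstar x - zstar x') <= Ka * Nx (x - x').
Proof.
move=> Xx Xx'; have [Zs Gs] := hz Xx; have [Zs' Gs'] := hz Xx'.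
have H : Nz (zstar x - zstar x') <= L * Nz (zstar x - zstar x') + a * Nx (x - x').
  have E : zstar x - zstar x' = (G x (zstar x) - G x (zstar x')) + (G x (zstar x') - G x' (zstar x')).
    by rewrite Gs Gs'; rewrite addrA subrK.
  rewrite {1}E.
  apply: le_trans (Ntri hNz _ _) _; apply: lerD; first exact: HG1.
  exact: HG2.
have := hL1 => h1.
rewrite /Ka mulrC mulrA ler_pdivlMr; last lra.
have := Nge0 hNz (zstar x - zstar x'); nra.
Qed.

Lemma Giter_Z m x z : X x -> Z z -> Z (Giter G m x z).
Proof. by move=> Xx Zz; elim: m => [|m IH] //=; apply: GZ. Qed.

Lemma Giter_contr m x z : X x -> Z z ->
  Nz (Giter G m x z - zstar x) <= L ^+ m * Nz (z - zstar x).
Proof.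
move=> Xx Zz; have [Zs Gs] := hz Xx.
elim: m => [|m IH]; first by rewrite expr0 mul1r.
rewrite /Giter iterS -/(Giter G m x z) -{1}Gs.
apply: le_trans (HG1 Xx (Giter_Z m Xx Zz) Zs) _.
rewrite exprS -mulrA; exact: ler_wpM2l.
Qed.

Lemma Fk_bound xk z : X xk -> Z z ->
  Nx (f xk z) <= b * Nz (z - zstar xk) + (c + Kc) * Nx xk.
Proof.
move=> Xk Zz; have [Zs Gs] := hz Xk.
have -> : f xk z = (f xk z - f xk (zstar xk)) + (f xk (zstar xk) - f 0 (zstar xk))
   + (f 0 (zstar xk) - f 0 0) by rewrite f00 subr0 !addrA !subrK.
apply: le_trans (Ntri hNx _ _) _.
have h1 := Hf1 Xk Zz Zs.
have h2 := Hf2 Zs Xk X0; rewrite subr0 in h2.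
have h3 := Hf1 X0 Zs Z0.
have h4 := zstar_lip Xk X0; rewrite zstar0 !subr0 in h4.
have h5 := Ntri hNx (f xk z - f xk (zstar xk)) (f xk (zstar xk) - f 0 (zstar xk)).
rewrite !subr0 in h3.
have h6 : b * Nz (zstar xk) <= b * (Ka * Nx xk) by apply: ler_wpM2l.
rewrite KcE; have := Nge0 hNx xk; have := Ka_ge0; have := b0; nra.
Qed.

Variables (n : nat) (T : R) (x : R -> 'rV[R]_nx) (zs : nat -> 'rV[R]_nz).
Hypothesis hsol : is_solution X Z f G n T x zs.
Hypothesis T0 : 0 < T.

Lemma xcont t : 0 <= t -> forall e, 0 < e -> exists2 d, 0 < d &
  forall u, 0 <= u -> `|u - t| < d -> `|x u - x t| < e.
Proof.
case: hsol => _ _ _ hcx _ t0 e e0.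
have h := within_cont_ed hcx (x := t).
have [d d0 H] := h (ltac:(by rewrite /= in_itv /= t0)) e e0.
exists d => // u u0; apply: H; by rewrite /= in_itv /= u0.
Qed.

Lemma Nabs_diff (p q : 'rV[R]_nx) : `|Nx p - Nx q| <= Nx (p - q).
Proof.
rewrite ler_norml; apply/andP; split; last exact: Nrev.
have := Nrev hNx q p; rewrite (NB hNx q p); lra.
Qed.

Lemma gcont (c1 : 'rV[R]_nx) t0 t1 : 0 <= t0 -> cont_on (fun t => Nx (x t - c1)) t0 t1.
Proof.
move=> h t /andP[ta tb] e e0.
have [C C0 HC] := Nbound hNx.
have e' : 0 < e / (C + 1) by apply: divr_gt0 => //; lra.
have [d d0 H] := xcont (le_trans h ta) e'.
exists d => // u /andP[ua ub] ut.
apply: le_lt_trans (Nabs_diff _ _) _.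
have -> : x u - c1 - (x t - c1) = x u - x t by rewrite opprB addrA subrK.
apply: le_lt_trans (HC _) _.
have hu := H u (le_trans h ua) ut.
have hq : e / (C + 1) * (C + 1) = e by rewrite divfK //; apply/lt0r_neq0; lra.
have : C * `|x u - x t| <= C * (e / (C + 1)) by apply: ler_wpM2l => //; exact: ltW.
have : 0 < e / (C + 1) by [].
nra.
Qed.

Lemma tk_ge0 k : 0 <= k%:R * T.
Proof. by apply: mulr_ge0 => //; exact: ltW. Qed.
Lemma tkS k : k.+1%:R * T = k%:R * T + T.
Proof. by rewrite -addn1 natrD mulrDl mul1r. Qed.

Lemma solX t : 0 <= t -> X (x t).
Proof. by case: hsol => h _ _ _ _; exact: h. Qed.
Lemma solZ k : Z (zs k).
Proof. by case: hsol => _ h _ _ _; exact: h. Qed.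
Lemma solder k t : k%:R * T < t < k%:R * T + T -> is_derive t 1 x (f (x t) (zs k.+1)).
Proof. by case: hsol => _ _ _ _ h; rewrite -tkS; exact: h. Qed.
Lemma solzs k : zs k.+1 = Giter G n (x (k%:R * T)) (zs k).
Proof. by case: hsol => _ _ h _ _; exact: h. Qed.

Lemma bound_d k t : k%:R * T <= t <= k%:R * T + T ->
  Nx (x t - x (k%:R * T)) <= Nx (f (x (k%:R * T)) (zs k.+1)) * psi xi (t - k%:R * T).
Proof.
move=> ht.
set tk := k%:R * T; set xk := x tk; set z := zs k.+1; set Fk := Nx (f xk z).
have := comparison (g := fun t => Nx (x t - xk)) (t0 := tk) (t1 := tk + T) (lam := xi) (mu := Fk)
  (@gcont xk tk (tk + T) (tk_ge0 k)).
move=> H.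
have Hd : dini_le (fun t0 : R => Nx (x t0 - xk)) tk (tk + T) xi Fk; last first.
  by have := H Hd t ht; rewrite /xk subrr (N0 hNx) mulr0 add0r.
move=> s /andP[s1 s2] e e0.
have der : is_derive s 1 x (f (x s) z) by apply: solder; rewrite -/tk s1 s2.
have Xs : X (x s) by apply: solX; apply: le_trans (tk_ge0 k) (ltW s1).
have Xk : X xk by apply: solX; exact: tk_ge0.
apply: (norm_dini hNx hwp hc der (Nge0 hNx _)) => //.
have -> : f (x s) z = (f (x s) z - f xk z) + f xk z by rewrite subrK.
apply: le_trans (wp_add hwp _ _ _) _.
have h1 := Hxi (solZ k.+1) Xs Xk.
have h2 := wp_CS hNx hwp hc (f xk z) (x s - xk).
rewrite -/z in h1 h2; rewrite -/Fk in h2.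
rewrite -/Fk; rewrite expr2 in h1; nra.
Qed.

Lemma zdist k s : k%:R * T <= s <= k%:R * T + T ->
  Nz (zs k.+1 - zstar (x s)) <= Nz (zs k.+1 - zstar (x (k%:R * T))) +
     Ka * psi xi T * Nx (f (x (k%:R * T)) (zs k.+1)).
Proof.
move=> hs.
have Xs : X (x s) by apply: solX; apply: le_trans (tk_ge0 k) _; case/andP: hs.
have Xk : X (x (k%:R * T)) by apply: solX; exact: tk_ge0.
apply: le_trans (Ntri3 hNz _ (zstar (x (k%:R * T))) _) _.
apply: lerD => //.
apply: le_trans (zstar_lip Xk Xs) _.
rewrite -mulrA; apply: ler_wpM2l; first exact: Ka_ge0.
rewrite (NB hNx) [psi _ _ * _]mulrC.
apply: le_trans (bound_d hs) _.
apply: ler_wpM2l; first exact: Nge0.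
apply: psi_mono; case/andP: hs => _; lra.
Qed.

Lemma bound_x k t : k%:R * T <= t <= k%:R * T + T ->
  Nx (x t) <= expR (- zeta * (t - k%:R * T)) * Nx (x (k%:R * T)) +
   (b * Nz (zs k.+1 - zstar (x (k%:R * T))) + Kc * psi xi T * Nx (f (x (k%:R * T)) (zs k.+1)))
     * psi (- zeta) (t - k%:R * T).
Proof.
move=> ht.
set tk := k%:R * T; set xk := x tk; set z := zs k.+1; set Fk := Nx (f xk z).
set E := Nz (z - zstar xk).
set mu := b * E + Kc * psi xi T * Fk.
have mu0 : 0 <= mu.
  apply: addr_ge0; first by apply: mulr_ge0 => //; exact: Nge0.
  apply: mulr_ge0; last exact: Nge0.
  apply: mulr_ge0; first exact: Kc_ge0.
  by apply: psi_ge0; exact: ltW.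
have := comparison (g := fun t => Nx (x t - 0)) (t0 := tk) (t1 := tk + T) (lam := - zeta) (mu := mu)
  (@gcont 0 tk (tk + T) (tk_ge0 k)).
move=> H.
have Hd : dini_le (fun t0 : R => Nx (x t0 - 0)) tk (tk + T) (- zeta) mu; last first.
  by have := H Hd t ht; rewrite !subr0.
move=> s /andP[s1 s2] e e0.
have der : is_derive s 1 x (f (x s) z) by apply: solder; rewrite -/tk s1 s2.
have Xs : X (x s) by apply: solX; apply: le_trans (tk_ge0 k) (ltW s1).
have [Zs _] := hz Xs.
apply: (norm_dini hNx hwp hc der mu0) => //.
have -> : f (x s) z = (f (x s) (zstar (x s)) - f 0 (zstar 0)) + (f (x s) z - f (x s) (zstar (x s))).
  by rewrite zstar0 f00 subr0 addrC subrK.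
apply: le_trans (wp_add hwp _ _ _) _.
have h1 := Hzeta Xs X0.
have h2 := wp_CS hNx hwp hc (f (x s) z - f (x s) (zstar (x s))) (x s - 0).
have h3 := Hf1 Xs (solZ k.+1) Zs; rewrite -/z in h3.
have hs' : tk <= s <= tk + T by rewrite (ltW s1) (ltW s2).
have h4 := zdist hs'; rewrite -/tk -/xk -/Fk -/E -/z in h4.
have N0s := Nge0 hNx (x s - 0).
have h6 : b * Nz (z - zstar (x s)) <= mu.
  have := ler_wpM2l b0 h4.
  have -> : b * (E + Ka * psi xi T * Fk) = mu by rewrite /mu KcE; ring.
  done.
have h5 : Nx (f (x s) z - f (x s) (zstar (x s))) * Nx (x s - 0) <= mu * Nx (x s - 0).
  apply: ler_wpM2r => //; exact: le_trans h3 h6.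
rewrite expr2 in h1.
nra.
Qed.

Lemma bound_E k :
  Nz (zs k.+2 - zstar (x (k.+1%:R * T))) <= L ^+ n *
    (Nz (zs k.+1 - zstar (x (k%:R * T))) + Ka * psi xi T * Nx (f (x (k%:R * T)) (zs k.+1))).
Proof.
rewrite solzs.
have X1 : X (x (k.+1%:R * T)) by apply: solX; exact: tk_ge0.
apply: le_trans (Giter_contr n X1 (solZ k.+1)) _.
apply: ler_wpM2l; first by apply: exprn_ge0.
rewrite tkS; apply: zdist; apply/andP; split; have := T0; lra.
Qed.

Definition Psi := psi xi T.
Definition om := psi (- zeta) T.
Definition eT := expR (- zeta * T).
Definition m11 := eT + om * (Kc * Psi * (c + Kc)).
Definition m12 := om * (b * (1 + Kc * Psi)).
Definition m21 := L ^+ n * (Ka * Psi * (c + Kc)).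
Definition m22 := L ^+ n * (1 + Ka * Psi * b).

Lemma Psi_ge0 : 0 <= Psi. Proof. apply: psi_ge0; have := T0; lra. Qed.
Lemma om_ge0 : 0 <= om. Proof. apply: psi_ge0; have := T0; lra. Qed.
Lemma omE : om = (1 - eT) / zeta. Proof. exact: psiN_E. Qed.
Lemma eT_lt1 : eT < 1.
Proof. by rewrite /eT expR_lt1 mulNr oppr_lt0; apply: mulr_gt0. Qed.
Lemma Ln_ge0 : 0 <= L ^+ n. Proof. exact: exprn_ge0. Qed.

Definition Xs k := Nx (x (k%:R * T)).
Definition Es k := Nz (zs k.+1 - zstar (x (k%:R * T))).

Lemma step_X k : Xs k.+1 <= m11 * Xs k + m12 * Es k.
Proof.
have := bound_x (t := k%:R * T + T) (k := k) (ltac:(apply/andP; split; have := T0; lra)).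
have -> : k%:R * T + T - k%:R * T = T by ring.
rewrite -tkS -/(Xs k.+1) -/(Xs k) -/eT -/Psi -/om.
set E := Nz _; set F := Nx _ => H.
have hF : F <= b * E + (c + Kc) * Xs k.
  apply: Fk_bound; [apply: solX; exact: tk_ge0 | exact: solZ].
apply: le_trans H _.
have hK : 0 <= Kc * Psi by apply: mulr_ge0; [exact: Kc_ge0 | exact: Psi_ge0].
have h1 : Kc * Psi * F <= Kc * Psi * (b * E + (c + Kc) * Xs k) by apply: ler_wpM2l.
have h2 : (b * E + Kc * Psi * F) * om <= (b * E + Kc * Psi * (b * E + (c + Kc) * Xs k)) * om.
  apply: ler_wpM2r; [exact: om_ge0 | lra].
apply: le_trans (lerD (lexx _) h2) _.
rewrite /m11 /m12 (_ : Es k = E) //; lra.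
Qed.

Lemma step_E k : Es k.+1 <= m21 * Xs k + m22 * Es k.
Proof.
have := bound_E k; rewrite -/(Es k.+1) -/(Es k) -/Psi.
set F := Nx _ => H.
have hF : F <= b * Es k + (c + Kc) * Xs k.
  apply: Fk_bound; [apply: solX; exact: tk_ge0 | exact: solZ].
apply: le_trans H _.
have hK : 0 <= Ka * Psi by apply: mulr_ge0; [exact: Ka_ge0 | exact: Psi_ge0].
have h1 : Ka * Psi * F <= Ka * Psi * (b * Es k + (c + Kc) * Xs k) by apply: ler_wpM2l.
have h2 : L ^+ n * (Es k + Ka * Psi * F) <= L ^+ n * (Es k + Ka * Psi * (b * Es k + (c + Kc) * Xs k)).
  apply: ler_wpM2l; [exact: Ln_ge0 | lra].
apply: le_trans h2 _.
rewrite /m21 /m22; lra.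
Qed.

Definition C1 := Kc * (c + Kc).
Definition C2 := L ^+ n * (a * b / (1 - L)).

Lemma schur : Psi * (C2 + C1 / zeta) < 1 - L ^+ n ->
  [/\ 0 <= m11, 0 <= m12, 0 <= m21 & 0 <= m22] /\ [/\ m11 < 1, m22 < 1 &
      m12 * m21 < (1 - m11) * (1 - m22)].
Proof.
move=> cond.
have z0 := zeta0.
have zn : zeta != 0 by rewrite gt_eqF.
have Ps := Psi_ge0; have oms := om_ge0; have Kc0 := Kc_ge0; have Ka0 := Ka_ge0.
have Ln := Ln_ge0; have et1 := eT_lt1; have et0 : 0 < eT by exact: expR_gt0.
have hc0 := c0; have hb0 := b0.
set bt := 1 - eT.
set u := C1 * Psi / zeta; set v := L ^+ n * Kc * Psi.
have u0 : 0 <= u.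
  rewrite /u; apply: divr_ge0; last lra.
  apply: mulr_ge0 => //; rewrite /C1; apply: mulr_ge0 => //; lra.
have v0 : 0 <= v by rewrite /v; apply: mulr_ge0 => //; apply: mulr_ge0.
have C2E : C2 = L ^+ n * Kc by rewrite /C2 /Kc (mulrC a b).
have uv : u + v < 1 - L ^+ n.
  have -> : u + v = Psi * (C2 + C1 / zeta) by rewrite C2E /u /v; field.
  exact: cond.
have E11 : 1 - m11 = bt * (1 - u).
  by rewrite /m11 omE /u /C1 /bt; field.
have E22 : 1 - m22 = 1 - L ^+ n - v.
  by rewrite /m22 /v KcE; ring.
have E12 : m12 * m21 = bt * (L ^+ n * (1 + Kc * Psi)) * u.
  by rewrite /m12 /m21 omE /u /C1 /bt KcE; field.
have D : (1 - m11) * (1 - m22) - m12 * m21 = bt * (1 - L ^+ n - u - v).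
  by rewrite E11 E22 E12 /v; ring.
have bt0 : 0 < bt by rewrite /bt; lra.
have m11p : 0 <= m11.
  rewrite /m11; apply: addr_ge0; first lra.
  apply: mulr_ge0 => //; apply: mulr_ge0; [exact: mulr_ge0 | lra].
have m12p : 0 <= m12 by rewrite /m12; apply: mulr_ge0 => //; apply: mulr_ge0 => //; have := mulr_ge0 Kc0 Ps; lra.
have m21p : 0 <= m21.
  rewrite /m21; apply: mulr_ge0 => //; apply: mulr_ge0; [exact: mulr_ge0 | lra].
have m22p : 0 <= m22.
  rewrite /m22; apply: mulr_ge0 => //; have := mulr_ge0 (mulr_ge0 Ka0 Ps) hb0; lra.
split => //; split.
- have : 0 < bt * (1 - u) by apply: mulr_gt0 => //; lra.
  lra.
- lra.
- have : 0 < bt * (1 - L ^+ n - u - v) by apply: mulr_gt0 => //; lra.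
  lra.
Qed.

Definition qq := qd m11 m12 m21 m22.
Definition th := thd m11 m12 m21 m22.
Definition P1 := 1 + Kc * Psi * (c + Kc) / zeta + Ka.
Definition P2 := (b + Kc * Psi * b) / zeta + 1.
Definition Pm := Num.max P1 (P2 / qq).
Definition Qm := Num.max (1 + qq * Ka) qq.
Definition alpha := - ln th / T.
Definition rho := 2 * Pm * Qm / th.

Lemma consts_pos : Psi * (C2 + C1 / zeta) < 1 - L ^+ n ->
  [/\ 0 < qq, 0 < th, th < 1, 0 < alpha & 0 < rho].
Proof.
move=> cond; have [[h11 h12 h21 h22] [l11 l22 hD]] := schur cond.
have [q0 th0 th1 _] := @decay R (fun=> 0) (fun=> 0) _ _ _ _ h11 h12 h21 h22 l11 l22 hD
  (fun _ => lexx 0) (fun _ => lexx 0) (fun _ => ltac:(rewrite !mulr0 addr0 //))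
  (fun _ => ltac:(rewrite !mulr0 addr0 //)).
rewrite -/qq -/th in q0 th0 th1.
split => //.
  rewrite /alpha; apply: divr_gt0; last exact: T0.
  by rewrite oppr_gt0; apply: ln_lt0; rewrite th0 th1.
have P1p : 0 < P1.
  rewrite /P1; have := Ka_ge0; have : 0 <= Kc * Psi * (c + Kc) / zeta.
    apply: divr_ge0; last exact: ltW.
    apply: mulr_ge0; [apply: mulr_ge0; [exact: Kc_ge0|exact: Psi_ge0]|].
    have := Kc_ge0; have := c0; lra.
  lra.
have Pmp : 0 < Pm by rewrite /Pm lt_max P1p.
have Qmp : 0 < Qm by rewrite /Qm lt_max q0 orbT.
rewrite /rho; apply: divr_gt0 => //; apply: mulr_gt0 => //; apply: mulr_gt0 => //; lra.
Qed.

Lemma Xs_ge0 k : 0 <= Xs k. Proof. exact: Nge0. Qed.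
Lemma Es_ge0 k : 0 <= Es k. Proof. exact: Nge0. Qed.

Lemma final_bound : Psi * (C2 + C1 / zeta) < 1 - L ^+ n ->
  forall (k : nat) (t : R), 0 <= t -> k%:R * T <= t < k.+1%:R * T ->
  wnorm2 1 1 (Nx (x t)) (Nz (zs k.+1))
    <= rho * expR (- alpha * t) * wnorm2 1 1 (Nx (x 0)) (Nz (zs 1%N)).
Proof.
move=> cond k t t0 /andP[tk1 tk2].
have [[h11 h12 h21 h22] [l11 l22 hD]] := schur cond.
have [q0 th0 th1 HV] := decay h11 h12 h21 h22 l11 l22 hD Xs_ge0 Es_ge0 step_X step_E.
rewrite -/qq -/th in q0 th0 th1 HV.
have [_ _ _ al0 rh0] := consts_pos cond.
rewrite tkS in tk2.
set A := Nx (x t); set B := Nz (zs k.+1).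
have A0 : 0 <= A by exact: Nge0.
have B0 : 0 <= B by exact: Nge0.
have Xk : X (x (k%:R * T)) by apply: solX; exact: tk_ge0.
set X0v := Nx (x 0); set Z1 := Nz (zs 1%N).
have X00 : 0 <= X0v by exact: Nge0.
have Z10 : 0 <= Z1 by exact: Nge0.
set Xk' := Xs k; set Ek := Es k.
have Xk0 : 0 <= Xk' by exact: Xs_ge0.
have Ek0 : 0 <= Ek by exact: Es_ge0.
have hF : Nx (f (x (k%:R * T)) (zs k.+1)) <= b * Ek + (c + Kc) * Xk' by apply: Fk_bound => //; exact: solZ.
set F := Nx (f (x (k%:R * T)) (zs k.+1)) in hF.
have F0 : 0 <= F by exact: Nge0.
have Kc0 := Kc_ge0; have Ka0 := Ka_ge0; have Ps0 := Psi_ge0.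
have KP0 : 0 <= Kc * Psi by apply: mulr_ge0.
have zi0 : 0 < zeta^-1 by rewrite invr_gt0.
have hA : A <= Xk' + (b * Ek + Kc * Psi * (b * Ek + (c + Kc) * Xk')) * zeta^-1.
  have := bound_x (k := k) (t := t) (ltac:(rewrite tk1 /=; exact: ltW)).
  rewrite -/A -/Psi.
  have -> : Nz (zs k.+1 - zstar (x (k%:R * T))) = Ek by [].
  have -> : Nx (x (k%:R * T)) = Xk' by [].
  rewrite -/F => H; apply: le_trans H _.
  set sg := t - k%:R * T.
  have sg0 : 0 <= sg by rewrite /sg; lra.
  have e1 : expR (- zeta * sg) <= 1 by rewrite expR_le1 mulNr oppr_le0; apply: mulr_ge0 => //; exact: ltW zeta0.
  have p1 : psi (- zeta) sg <= zeta^-1 by apply: psiN_le.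
  have p0 : 0 <= psi (- zeta) sg by apply: psi_ge0.
  have mu0 : 0 <= b * Ek + Kc * Psi * F by apply: addr_ge0; [apply: mulr_ge0 => //; exact: b0 | exact: mulr_ge0].
  have i1 : expR (- zeta * sg) * Xk' <= Xk' by rewrite -{2}(mul1r Xk'); apply: ler_wpM2r.
  have i2 : (b * Ek + Kc * Psi * F) * psi (- zeta) sg <= (b * Ek + Kc * Psi * F) * zeta^-1 by apply: ler_wpM2l.
  have i3 : (b * Ek + Kc * Psi * F) * zeta^-1 <= (b * Ek + Kc * Psi * (b * Ek + (c + Kc) * Xk')) * zeta^-1.
    apply: ler_wpM2r; first exact: ltW.
    have := ler_wpM2l KP0 hF; lra.
  lra.
have hB : B <= Ek + Ka * Xk'.
  rewrite /B -(subr0 (zs k.+1)).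
  apply: le_trans (Ntri3 hNz _ (zstar (x (k%:R * T))) _) _.
  apply: lerD => //.
  have := zstar_lip Xk X0; rewrite zstar0 => H; apply: le_trans H _.
  by rewrite subr0.
have hAB : A + B <= Pm * (Xk' + qq * Ek).
  have P1m : P1 <= Pm by rewrite /Pm le_max lexx.
  have P2m : P2 / qq <= Pm by rewrite /Pm le_max lexx orbT.
  have hP2 : P2 * Ek <= Pm * qq * Ek.
    have -> : P2 * Ek = P2 / qq * qq * Ek by rewrite divfK // gt_eqF.
    apply: ler_wpM2r => //; apply: ler_wpM2r => //; exact: ltW.
  have hP1 : P1 * Xk' <= Pm * Xk' by apply: ler_wpM2r.
  have : A + B <= P1 * Xk' + P2 * Ek.
    have -> : P1 * Xk' + P2 * Ek = (Xk' + (b * Ek + Kc * Psi * (b * Ek + (c + Kc) * Xk')) * zeta^-1) + (Ek + Ka * Xk').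
      by rewrite /P1 /P2; ring.
    exact: lerD.
  lra.
have hV := HV k; rewrite -/Xk' -/Ek in hV.
have hE0 : Es 0 <= Z1 + Ka * X0v.
  rewrite /Es mul0r.
  apply: le_trans (Ntri3 hNz _ 0 _) _.
  apply: lerD; first by rewrite subr0.
  have := zstar_lip (solX (lexx 0)) X0; rewrite zstar0 !subr0 sub0r (NN hNz) //.
have hX0 : Xs 0 = X0v by rewrite /Xs mul0r.
have hV0 : Xs 0 + qq * Es 0 <= Qm * (X0v + Z1).
  rewrite hX0.
  have : qq * Es 0 <= qq * (Z1 + Ka * X0v) by apply: ler_wpM2l => //; exact: ltW.
  have Q1 : 1 + qq * Ka <= Qm by rewrite /Qm le_max lexx.
  have Q2 : qq <= Qm by rewrite /Qm le_max lexx orbT.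
  have : (1 + qq * Ka) * X0v <= Qm * X0v by apply: ler_wpM2r.
  have : qq * Z1 <= Qm * Z1 by apply: ler_wpM2r.
  rewrite !mulrDl !mulrDr; lra.
have hW := sum_le_sqrt X00 Z10.
have hth : th ^+ k <= expR (- alpha * t) / th.
  rewrite ler_pdivlMr // -exprSr.
  have -> : th ^+ k.+1 = expR (ln th * k.+1%:R) by rewrite expRM_natr lnK // posrE.
  rewrite ler_expR /alpha.
  have lt0 : ln th < 0 by apply: ln_lt0; rewrite th0 th1.
  have H : t / T <= k.+1%:R.
    by rewrite ler_pdivrMr // tkS; exact: ltW.
  have -> : - (- ln th / T) * t = ln th * (t / T) by field; rewrite gt_eqF //; exact: T0.
  by apply: ler_wnM2l => //; exact: ltW.
have w1 := sqrt_le_sum A0 B0.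
rewrite /wnorm2; apply: le_trans w1 _.
apply: le_trans hAB _.
have Pmp : 0 <= Pm.
  have h : 0 <= Kc * Psi * (c + Kc) / zeta.
    apply: divr_ge0; last exact: ltW.
    apply: mulr_ge0 => //; have := c0; lra.
  have P1p : 0 <= P1 by rewrite /P1; lra.
  apply: le_trans P1p _; by rewrite /Pm le_max lexx.
have Qmp : 0 <= Qm by rewrite /Qm le_max; apply/orP; right; exact: ltW.
have eA : 0 <= expR (- alpha * t) / th by apply: divr_ge0; [exact: ltW (expR_gt0 _) | exact: ltW].
have s1 : Pm * (Xk' + qq * Ek) <= Pm * (th ^+ k * (Xs 0 + qq * Es 0)) by apply: ler_wpM2l.
apply: le_trans s1 _.
have s2 : th ^+ k * (Xs 0 + qq * Es 0) <= expR (- alpha * t) / th * (Qm * (X0v + Z1)).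
  apply: ler_pM => //; [exact: exprn_ge0 (ltW th0) | apply: addr_ge0; [exact: Xs_ge0 | apply: mulr_ge0; [exact: ltW | exact: Es_ge0]]].
have s3 : expR (- alpha * t) / th * (Qm * (X0v + Z1)) <= expR (- alpha * t) / th * (Qm * (2 * Num.sqrt (1 * X0v ^+ 2 + 1 * Z1 ^+ 2))).
  by apply: ler_wpM2l => //; apply: ler_wpM2l.
have := ler_wpM2l Pmp (le_trans s2 s3).
move=> H; apply: le_trans H _.
rewrite le_eqVlt; apply/orP; left; apply/eqP.
rewrite /rho; field; rewrite gt_eqF //.
Qed.
End Main.

Section TB.
Variable R : realType.
Variables (L a b c xi zeta : R) (n : nat).
Hypotheses (hL0 : 0 <= L) (hL1 : L < 1) (a0 : 0 < a) (b0 : 0 < b) (c0 : 0 <= c)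
  (z0 : 0 < zeta) (n0 : (0 < n)%N).

Let D := C2 L a b n + C1 L a b c / zeta.
Lemma D_gt0 : 0 < D.
Proof.
have l1 : 0 < 1 - L by rewrite subr_gt0.
have Kp : 0 < Kc L a b by rewrite /Kc; apply: divr_gt0 => //; apply: mulr_gt0.
have C1p : 0 < C1 L a b c by rewrite /C1; apply: mulr_gt0 => //; have := Kp; have := c0; lra.
have C2p : 0 <= C2 L a b n.
  rewrite /C2; apply: mulr_ge0; first exact: exprn_ge0.
  apply: divr_ge0; [apply: mulr_ge0; apply: ltW => // | exact: ltW].
rewrite /D; have : 0 < C1 L a b c / zeta by apply: divr_gt0.
lra.
Qed.
Lemma Ln_lt1 : 0 < 1 - L ^+ n.
Proof. by rewrite subr_gt0 exprn_ilt1 // -lt0n. Qed.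

Lemma TboundE : Tbound L a b c xi zeta n =
  if xi == 0 then ((1 - L ^+ n) / D)%:E
  else if xi * (1 - L ^+ n) / D + 1 <= 0 then +oo%E
  else (ln (xi * (1 - L ^+ n) / D + 1) / xi)%:E.
Proof. by []. Qed.

Lemma Tbound_pos : (0%:E < Tbound L a b c xi zeta n)%E.
Proof.
have Dp := D_gt0; have Lp := Ln_lt1.
rewrite TboundE; case: eqP => [_|/eqP x0].
  by rewrite lte_fin; apply: divr_gt0.
set arg := xi * (1 - L ^+ n) / D + 1.
case: ifP => [_|ag1]; first exact: ltey. have ag0 : 0 < arg by rewrite ltNge ag1.
rewrite lte_fin.
have [xp|xn] := ltP 0 xi.
  apply: divr_gt0 => //; apply: ln_gt0.
  rewrite /arg ltrDr; apply: divr_gt0 => //; exact: mulr_gt0.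
have xn' : xi < 0 by rewrite lt_neqAle x0.
have lnn : ln arg < 0.
  apply: ln_lt0; rewrite ag0 /= /arg gtrDr.
  rewrite pmulr_llt0 ?invr_gt0 //; rewrite nmulr_rlt0 //.
rewrite -mulrNN -invrN; apply: mulr_gt0; first by rewrite oppr_gt0.
by rewrite invr_gt0 oppr_gt0.
Qed.

Lemma Tbound_cond T : 0 < T -> (T%:E < Tbound L a b c xi zeta n)%E ->
  psi xi T * D < 1 - L ^+ n.
Proof.
move=> T0; have Dp := D_gt0; have Lp := Ln_lt1.
rewrite -ltr_pdivlMr //.
set r := (1 - L ^+ n) / D.
have r0 : 0 < r by apply: divr_gt0.
rewrite TboundE -/r; rewrite /psi; case: eqP => [_|/eqP x0]; first by rewrite lte_fin.
have argE : xi * (1 - L ^+ n) / D + 1 = xi * r + 1 by rewrite /r mulrA.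
rewrite argE.
have [xp|xn] := ltP 0 xi.
  have ag : 1 < xi * r + 1 by rewrite ltrDr; exact: mulr_gt0.
  rewrite leNgt (lt_trans ltr01 ag) /= lte_fin => HT.
  rewrite ltr_pdivrMr // ltrBlDr.
  have : xi * T < ln (xi * r + 1) by rewrite mulrC -ltr_pdivlMr.
  rewrite -ltr_expR lnK ?posrE; last exact: lt_trans ltr01 ag.
  by rewrite [r * _]mulrC.
have xn' : xi < 0 by rewrite lt_neqAle x0.
have key : xi * r + 1 < expR (T * xi) -> (expR (xi * T) - 1) / xi < r.
  move=> H; rewrite -mulrNN -invrN ltr_pdivrMr ?oppr_gt0 //.
  rewrite [T * xi]mulrC in H; lra.
case: ifP => [ag _|ag1].
  apply: key; apply: le_lt_trans ag (expR_gt0 _).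
have ag : 0 < xi * r + 1 by rewrite ltNge ag1.
rewrite lte_fin => HT; apply: key.
have : ln (xi * r + 1) < T * xi.
  by move: HT; rewrite ltr_ndivlMr.
by rewrite -ltr_expR lnK ?posrE.
Qed.
End TB.

Unset Implicit Arguments. Set Strict Implicit.

Theorem theorem3 (R : realType) (nx nz : nat)
  (Nx : 'rV[R]_nx -> R) (Nz : 'rV[R]_nz -> R)
  (X : set 'rV[R]_nx) (Z : set 'rV[R]_nz)
  (f : 'rV[R]_nx -> 'rV[R]_nz -> 'rV[R]_nx) (G : 'rV[R]_nx -> 'rV[R]_nz -> 'rV[R]_nz)
  (wp : 'rV[R]_nx -> 'rV[R]_nx -> R) (zstar : 'rV[R]_nx -> 'rV[R]_nz)
  (xi zeta : R) :
  is_norm Nx -> is_norm Nz ->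
  convex_set X -> convex_set Z ->
  {within X `*` Z, continuous (fun p : 'rV[R]_nx * 'rV[R]_nz => f p.1 p.2)} ->
  {within X `*` Z, continuous (fun p : 'rV[R]_nx * 'rV[R]_nz => G p.1 p.2)} ->
  (forall x z, X x -> Z z -> Z (G x z)) ->
  X 0 -> Z 0 -> f 0 0 = 0 -> G 0 0 = 0 ->
  is_weak_pairing wp -> wp_compatible wp Nx ->
  (* (A1) *) (Lip_fst X Z Nx Nx f < +oo)%E ->
  (* (A2) *) (0%:E < Lip_snd X Z Nz Nx f < +oo)%E ->
             (0%:E < Lip_fst X Z Nx Nz G < +oo)%E ->
  (* (A3) *) (Lip_snd X Z Nz Nz G < 1%:E)%E ->
  (* z*(x) is the fixed point of z |-> G(x, z) in Z *)
  (forall x, X x -> Z (zstar x) /\ G x (zstar x) = zstar x) ->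
  (osLip_fst X Z wp Nx f <= xi%:E)%E ->
  0 < zeta ->
  (osLip X wp Nx (fun x => f x (zstar x)) <= (- zeta)%:E)%E ->
  let LzG := fine (Lip_snd X Z Nz Nz G) in
  let LxG := fine (Lip_fst X Z Nx Nz G) in
  let Lzf := fine (Lip_snd X Z Nz Nx f) in
  let Lxf := fine (Lip_fst X Z Nx Nx f) in
  forall n : nat, (0 < n)%N ->
    (0%:E < Tbound LzG LxG Lzf Lxf xi zeta n)%E /\
    forall T : R, 0 < T -> (T%:E < Tbound LzG LxG Lzf Lxf xi zeta n)%E ->
      exists eta1 eta2 rho alpha : R,
        [/\ 0 < eta1, 0 < eta2, 0 < rho, 0 < alpha &
          forall (x : R -> 'rV[R]_nx) (zs : nat -> 'rV[R]_nz),
            is_solution X Z f G n T x zs ->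
            forall (k : nat) (t : R), 0 <= t -> k%:R * T <= t < k.+1%:R * T ->
              wnorm2 eta1 eta2 (Nx (x t)) (Nz (zs k.+1))
                <= rho * expR (- alpha * t) * wnorm2 eta1 eta2 (Nx (x 0)) (Nz (zs 1%N))].

Proof.
move=> hNx hNz _ _ _ _ GZ X0 Z0 f00 G00 hwp hc A1 /andP[A2a A2b] /andP[A2c A2d] A3 hz Hxi_ zeta0 Hzeta_.
move=> LzG LxG Lzf Lxf n n0.
have A3' : (Lip_snd X Z Nz Nz G < +oo)%E by apply: lt_trans A3 (ltey _).
have hL0 : 0 <= LzG by apply: Lip_snd_ge0.
have hL1 : LzG < 1 by apply: fine_lt1.
have ha : 0 < LxG by apply: fine_gt0; rewrite A2c A2d.
have hb : 0 < Lzf by apply: fine_gt0; rewrite A2a A2b.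
have hcc : 0 <= Lxf by apply: Lip_fst_ge0.
have HG1 : forall x z1 z2, X x -> Z z1 -> Z z2 -> Nz (G x z1 - G x z2) <= LzG * Nz (z1 - z2).
  by move=> x z1 z2 Xx Z1 Z2; apply: Lip_snd_le.
have HG2 : forall z x1 x2, Z z -> X x1 -> X x2 -> Nz (G x1 z - G x2 z) <= LxG * Nx (x1 - x2).
  by move=> z x1 x2 Zz X1 X2; apply: Lip_fst_le.
have Hf1 : forall x z1 z2, X x -> Z z1 -> Z z2 -> Nx (f x z1 - f x z2) <= Lzf * Nz (z1 - z2).
  by move=> x z1 z2 Xx Z1 Z2; apply: Lip_snd_le.
have Hf2 : forall z x1 x2, Z z -> X x1 -> X x2 -> Nx (f x1 z - f x2 z) <= Lxf * Nx (x1 - x2).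
  by move=> z x1 x2 Zz X1 X2; apply: Lip_fst_le.
have Hxi : forall z x1 x2, Z z -> X x1 -> X x2 ->
    wp (f x1 z - f x2 z) (x1 - x2) <= xi * Nx (x1 - x2) ^+ 2.
  by move=> z x1 x2 Zz X1 X2; apply: (osLip_fst_le hNx hwp Hxi_).
have Hzeta : forall x1 x2, X x1 -> X x2 ->
    wp (f x1 (zstar x1) - f x2 (zstar x2)) (x1 - x2) <= - zeta * Nx (x1 - x2) ^+ 2.
  by move=> x1 x2 X1 X2; apply: (osLip_le (F := fun x => f x (zstar x)) hNx hwp Hzeta_).
split; first exact: Tbound_pos.
move=> T T0 HT.
have cond := Tbound_cond hL0 hL1 ha hb hcc zeta0 n0 T0 HT.
have [_ _ _ al0 rh0] := consts_pos hL0 hL1 (ltW ha) (ltW hb) hcc zeta0 T0 cond.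
exists 1, 1, (rho xi zeta LzG LxG Lzf Lxf n T), (alpha xi zeta LzG LxG Lzf Lxf n T).
split => //.
move=> x zs hsol k t t0 ht.
exact: (final_bound hNx hNz hwp hc X0 Z0 f00 G00 GZ hz hL0 hL1 (ltW ha) (ltW hb) hcc zeta0
  HG1 HG2 Hf1 Hf2 Hxi Hzeta hsol T0 cond t0 ht).
Qed.
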